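(* Let $\mu\in(0,1)$, $\rho\in[0,1]$, $\nu=\mu^2+\rho\mu(1-\mu)$ and $s=\mu(1-\mu)(1-\rho)$. Let $L_1(\mu,\nu)=\inf_{\pi\in\mathcal M(\mu,\nu)}\int P_1\,d\pi$ and $U_1(\mu,\nu)=\sup_{\pi\in\mathcal M(\mu,\nu)}\int P_1\,d\pi$ with $P_1(q)=3q^2-2q^3$. Then \[ L_1(\mu,\nu)=\nu+2\frac{(\mu-\nu)^2}{1-\mu}=\mu+s\{2\mu(1-\rho)-1\}, \] \[ U_1(\mu,\nu)=3\nu-2\frac{\nu^2}{\mu}=\mu+s\{2\mu+2\rho(1-\mu)-1\}. \] Moreover $U_1(\mu,\nu)-L_1(\mu,\nu)=2\mu(1-\mu)\rho(1-\rho)\le1/8$, and if $\mu>1/2$, then $\int P_1\,d\pi>\mu$ holds for every $\pi\in\mathcal M(\mu,\nu)$ if and only if $\rho<1-1/(2\mu)$.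
   Context: $\mathcal M(\mu,\nu)$ denotes the set of Borel probability measures $\pi$ on $[0,1]$ with $\int q\,d\pi(q)=\mu$ and $\int q^2\,d\pi(q)=\nu$. $P_1(q)=\mathbb{P}\{\mathrm{Bin}(3,q)\ge2\}$ is the three-vote majority success probability. *)

(* Defs.v *)
From HB Require Import structures.
From mathcomp Require Import all_boot all_order all_algebra.
From mathcomp Require Import all_classical all_reals all_analysis.
Set Implicit Arguments. Unset Strict Implicit. Unset Printing Implicit Defensive.
Import Order.TTheory GRing.Theory Num.Theory.
Local Open Scope classical_set_scope.
Local Open Scope ring_scope.

(* Three-vote majority success probability P{Bin(3,q) >= 2} = 3q^2 - 2q^3. *)
Definition P1 {R : realType} (q : R) : R := 3 * q ^+ 2 - 2 * q ^+ 3.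

(* M(mu,nu): Borel probability measures on [0,1] with first moment mu and
   second moment nu.  Represented as Borel probability measures on R that
   give full mass to [0,1]. *)
Definition Mset {R : realType} (mu nu : R) : set (probability R R) :=
  [set P : probability R R | P `[(0:R)%R, (1:R)%R]%classic = 1%E /\
           (\int[P]_x (x%:E) = mu%:E)%E /\
           (\int[P]_x ((x ^+ 2)%:E) = nu%:E)%E].

Definition L1 {R : realType} (mu nu : R) : \bar R :=
  ereal_inf [set (\int[P]_x (P1 x)%:E)%E | P in Mset mu nu].

Definition U1 {R : realType} (mu nu : R) : \bar R :=
  ereal_sup [set (\int[P]_x (P1 x)%:E)%E | P in Mset mu nu].

(* Main.v *)
Require Import Defs.
From HB Require Import structures.
From mathcomp Require Import all_boot all_order all_algebra.
From mathcomp Require Import all_classical all_reals all_analysis.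
From mathcomp Require Import measurable_realfun.
From mathcomp Require Import ring lra.
Import Order.TTheory GRing.Theory Num.Theory.
Local Open Scope classical_set_scope.
Local Open Scope ring_scope.

Ltac mfun := repeat (first [ exact: measurable_cst | exact: measurable_id | exact: exprn_measurable | apply: measurable_funD | apply: measurable_funB | apply: measurable_funN | apply: measurable_funM | apply: measurable_funX ]).

Section S.
Variables (R : realType) (m : {measure set R -> \bar R}).
Let D : set R := `[0%R, 1%R].
Hypothesis mD1 : m D = 1%E.
Hypothesis mDc : m (~` D) = 0%E.

Lemma mD : measurable D.
Proof. exact: measurable_itv. Qed.

Lemma intTD (f : R -> R) : measurable_fun setT f ->
  (\int[m]_x (f x)%:E = \int[m]_(x in D) (f x)%:E)%E.
Proof.
move=> mf; rewrite -(setUv D) integral_setU //.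
- rewrite (@null_set_integral _ _ _ m (~` D)) ?adde0 //.
  + apply: measurableC; exact: mD.
  + by apply/measurable_EFinP; exact: measurable_funTS.
- exact: mD.
- exact: measurableC mD.
- by apply/measurable_EFinP; rewrite setUv.
- by rewrite /disj_set setICr.
Qed.

Lemma integ (f : R -> R) (M : R) : measurable_fun setT f -> (forall x, D x -> `|f x| <= M) ->
  m.-integrable D (EFin \o f).
Proof.
move=> mf fM; apply: measurable_bounded_integrable.
- exact: mD.
- by rewrite mD1 ltry.
- exact: measurable_funTS.
- exists M; split; first by rewrite num_real.
  move=> y My x Dx; apply: (le_trans (fM x Dx)); exact: ltW.
Qed.

Lemma intE (f : R -> R) (M : R) : measurable_fun setT f -> (forall x, D x -> `|f x| <= M) ->
  (\int[m]_(x in D) (f x)%:E)%E = (Rintegral m D f)%:E.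
Proof.
move=> mf fM; rewrite fineK //; apply: integrable_fin_num; first exact: mD.
exact: integ mf fM.
Qed.

Lemma Dx x : D x -> 0 <= x <= 1.
Proof. by rewrite /D /= in_itv /=. Qed.

Lemma quad_bnd a b c x : D x ->
  `|a * x ^+ 2 + b * x + c| <= `|a| + `|b| + `|c|.
Proof.
move=> /Dx /andP[x0 x1].
have y0 : 0 <= x ^+ 2 by rewrite sqr_ge0.
have y1 : x ^+ 2 <= 1 by rewrite expr2; nra.
move: y0 y1; set y := x ^+ 2 => y0 y1.
have ha1 := ler_norm a; have ha2 : - a <= `|a| by rewrite -normrN ler_norm.
have hb1 := ler_norm b; have hb2 : - b <= `|b| by rewrite -normrN ler_norm.
have hc1 := ler_norm c; have hc2 : - c <= `|c| by rewrite -normrN ler_norm.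
have na := normr_ge0 a; have nb := normr_ge0 b; have nc := normr_ge0 c.
rewrite ler_norml; apply/andP; split; nra.
Qed.

Lemma quad_m a b c : measurable_fun setT (fun x : R => a * x ^+ 2 + b * x + c).
Proof. by mfun. Qed.

Lemma Iquad a b c : Rintegral m D (fun x => a * x ^+ 2 + b * x + c) =
  a * Rintegral m D (fun x => x ^+ 2) + b * Rintegral m D (fun x => x) + c.
Proof.
have i2 : m.-integrable D (EFin \o (fun x : R => x ^+ 2)).
  apply: (@integ _ (`|1| + `|0| + `|0|)); first by mfun.
  move=> x Dx; have h := quad_bnd 1 0 0 x Dx; rewrite mul1r mul0r !addr0 in h; exact: h.
have i1 : m.-integrable D (EFin \o (fun x : R => x)).
  apply: (@integ _ (`|0| + `|1| + `|0|)); first by mfun.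
  move=> x Dx; have h := quad_bnd 0 1 0 x Dx; rewrite mul1r mul0r add0r addr0 in h; exact: h.
rewrite RintegralD //; first last.
- by apply: (@integ _ `|c|); [mfun | move=> x _; rewrite lexx].
- apply: (@integ _ (`|a| + `|b| + `|0|)); first by mfun.
  move=> x Dx; have h := quad_bnd a b 0 x Dx; rewrite addr0 in h; exact: h.
- exact: mD.
rewrite RintegralD //; first last.
- apply: (@integ _ (`|0| + `|b| + `|0|)); first by mfun.
  move=> x Dx; have h := quad_bnd 0 b 0 x Dx; rewrite mul0r add0r addr0 in h; exact: h.
- apply: (@integ _ (`|a| + `|0| + `|0|)); first by mfun.
  move=> x Dx; have h := quad_bnd a 0 0 x Dx; rewrite mul0r !addr0 in h; exact: h.
- exact: mD.
rewrite RintegralZl //; last exact: mD.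
rewrite RintegralZl //; last exact: mD.
by rewrite Rintegral_cst; [rewrite mD1 /= mulr1 | exact: mD].
Qed.

Lemma P1_bnd x : D x -> `|P1 x| <= 1.
Proof.
move=> /Dx /andP[x0 x1]; have e : P1 x = x * x * (3 - 2 * x) by rewrite /P1; ring.
rewrite e ler_norml; apply/andP; split.
  have : 0 <= x * x * (3 - 2 * x) by apply: mulr_ge0; [exact: mulr_ge0 | lra].
  lra.
rewrite -subr_ge0.
have -> : 1 - x * x * (3 - 2 * x) = (1 - x) ^+ 2 * (1 + 2 * x) by ring.
by apply: mulr_ge0; [exact: sqr_ge0 | lra].
Qed.

Lemma P1_m : measurable_fun setT (@P1 R).
Proof. rewrite /P1; by mfun. Qed.

Lemma P1_int : m.-integrable D (EFin \o (@P1 R)).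
Proof. exact: (@integ _ 1 P1_m P1_bnd). Qed.

Lemma quad_int a b c : m.-integrable D (EFin \o (fun x : R => a * x ^+ 2 + b * x + c)).
Proof. exact: (@integ _ _ (quad_m a b c) (@quad_bnd a b c)). Qed.

Lemma lowP a : Rintegral m D (fun x => (1 - 4 * a) * x ^+ 2 + (4 * a + 2 * a ^+ 2) * x + (- 2 * a ^+ 2))
   <= Rintegral m D (@P1 R).
Proof.
apply: le_Rintegral; [exact: mD | exact: quad_int | exact: P1_int |].
move=> x /Dx /andP[x0 x1]; rewrite /P1.
have : 0 <= 2 * (x - a) ^+ 2 * (1 - x) by apply: mulr_ge0; [apply: mulr_ge0 => //; exact: sqr_ge0 | lra].
move=> h; rewrite -subr_ge0; apply: (le_trans h); rewrite le_eqVlt; apply/orP; left; apply/eqP; ring.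
Qed.

Lemma upP b : Rintegral m D (@P1 R) <=
  Rintegral m D (fun x => (3 - 4 * b) * x ^+ 2 + (2 * b ^+ 2) * x + 0).
Proof.
apply: le_Rintegral; [exact: mD | exact: P1_int | exact: quad_int |].
move=> x /Dx /andP[x0 x1]; rewrite /P1.
have : 0 <= 2 * x * (x - b) ^+ 2 by apply: mulr_ge0; [lra | exact: sqr_ge0].
move=> h; rewrite -subr_ge0; apply: (le_trans h); rewrite le_eqVlt; apply/orP; left; apply/eqP; ring.
Qed.

End S.

Section Mix.
Context (R : realType) (u v w : R) (hw0 : 0 <= w) (hw1 : 0 <= 1 - w).
Definition mixm : set R -> \bar R :=
  measure_add (mscale (NngNum hw0) \d_u) (mscale (NngNum hw1) \d_v).
Let m0 : mixm set0 = 0%E. Proof. exact: measure0. Qed.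
Let mge0 A : (0 <= mixm A)%E. Proof. exact: measure_ge0. Qed.
Let msig : semi_sigma_additive mixm. Proof. exact: measure_semi_sigma_additive. Qed.
HB.instance Definition _ := isMeasure.Build _ _ _ mixm m0 mge0 msig.
Lemma mixmE A : mixm A = (w%:E * \d_u A + (1 - w)%:E * \d_v A)%E.
Proof. by rewrite /mixm measure_addE. Qed.
Lemma mixT : mixm setT = 1%E.
Proof.
rewrite mixmE !diracE !in_setT /= !mule1 -EFinD.
by congr EFin; rewrite addrC subrK.
Qed.
HB.instance Definition _ := Measure_isProbability.Build _ _ _ mixm mixT.
End Mix.
Section Two.
Variable R : realType.
Let D : set R := `[0%R, 1%R].

Lemma two_int (u v w : R) (hw0 : 0 <= w) (hw1 : 0 <= 1 - w) (f : R -> R) :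
  D u -> D v -> measurable_fun setT f -> (forall x, D x -> 0 <= f x) ->
  (\int[@mixm R u v w hw0 hw1]_(x in D) (f x)%:E
   = (w * f u + (1 - w) * f v)%:E)%E.
Proof.
move=> Du Dv mf f0.
have mD : measurable D by exact: measurable_itv.
have mfD : measurable_fun D (fun x => (f x)%:E).
  by apply/measurable_EFinP; exact: measurable_funTS.
have f0' : forall x, D x -> (0 <= (f x)%:E)%E by move=> x Dx; rewrite lee_fin f0.
rewrite /mixm ge0_integral_measure_add //.
rewrite !ge0_integral_mscale //.
rewrite !integral_dirac // !diracE !mem_set //= !mul1e.
by rewrite -!EFinM -EFinD.
Qed.

End Two.

Section Two2.
Variable R : realType.
Let D : set R := `[0%R, 1%R].

Lemma two_point (u v w : R) : D u -> D v -> 0 <= w <= 1 ->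
  exists P : probability R R, Mset (w * u + (1 - w) * v) (w * u ^+ 2 + (1 - w) * v ^+ 2) P /\
   (\int[P]_x (P1 x)%:E = (w * P1 u + (1 - w) * P1 v)%:E)%E.
Proof.
move=> Du Dv /andP[hw0 w1].
have hw1 : 0 <= 1 - w by lra.
pose P : probability R R := @mixm R u v w hw0 hw1.
have PD : P D = 1%E.
  change (@mixm R u v w hw0 hw1 D = 1%E).
  rewrite mixmE !diracE !mem_set //= !mule1 -EFinD.
  by congr EFin; rewrite addrC subrK.
have PDc : P (~` D) = 0%E.
  change (@mixm R u v w hw0 hw1 (~` D) = 0%E).
  rewrite mixmE !diracE !memNset ?mule0 ?adde0 //.
exists P; split; last first.
  rewrite (@intTD _ P PDc (@P1 R)); last exact: P1_m.
  apply: (@two_int _ u v w hw0 hw1 _ Du Dv); first exact: P1_m.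
  move=> x /Dx /andP[x0 x1]; rewrite /P1.
  have -> : 3 * x ^+ 2 - 2 * x ^+ 3 = x * x * (3 - 2 * x) by ring.
  by apply: mulr_ge0; [exact: mulr_ge0 | lra].
split; first exact: PD.
split.
  rewrite (@intTD _ P PDc (fun x => x)); last by mfun.
  apply: (@two_int _ u v w hw0 hw1 (fun x => x) Du Dv); first by mfun.
  by move=> x /Dx /andP[].
rewrite (@intTD _ P PDc (fun x => x ^+ 2)); last by mfun.
apply: (@two_int _ u v w hw0 hw1 (fun x => x ^+ 2) Du Dv); first by mfun.
by move=> x _; exact: sqr_ge0.
Qed.

End Two2.

Lemma Mfacts (R : realType) (mu nu : R) (P : probability R R) : Mset mu nu P ->
  [/\ P (~` `[0%R, 1%R]) = 0%E,
   Rintegral P `[0%R, 1%R] (fun x => x) = mu,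
   Rintegral P `[0%R, 1%R] (fun x => x ^+ 2) = nu &
   (\int[P]_x (P1 x)%:E = (Rintegral P `[0%R, 1%R] (@P1 R))%:E)%E].
Proof.
move=> [PD [I1 I2]].
have PDc : P (~` `[0%R, 1%R]) = 0%E.
  by rewrite probability_setC ?PD ?subee //; exact: measurable_itv.
split => //.
- apply/EFin_inj; rewrite -I1 (@intTD _ P PDc (fun x => x)); last by mfun.
  apply/esym/(@intE _ P PD _ 1); first by mfun.
  by move=> x /Dx /andP[x0 x1]; rewrite ger0_norm.
- apply/EFin_inj; rewrite -I2 (@intTD _ P PDc (fun x => x ^+ 2)); last by mfun.
  apply/esym/(@intE _ P PD _ 1); first by mfun.
  move=> x /Dx /andP[x0 x1]; rewrite ger0_norm ?sqr_ge0 // expr2; nra.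
- rewrite (@intTD _ P PDc (@P1 R)); last exact: P1_m.
  apply: (@intE _ P PD (@P1 R) 1); [exact: P1_m | exact: (@P1_bnd R)].
Qed.

Lemma lowM (R : realType) (mu nu a : R) (P : probability R R) : Mset mu nu P ->
  (1 - 4 * a) * nu + (4 * a + 2 * a ^+ 2) * mu + (- 2 * a ^+ 2)
    <= Rintegral P `[0%R, 1%R] (@P1 R).
Proof.
move=> HP; have [PDc I1 I2 _] := @Mfacts _ _ _ _ HP; have PD : P `[0%R, 1%R]%classic = 1%E by case: HP.
by have := @lowP _ P PD a; rewrite Iquad // I1 I2.
Qed.

Lemma upM (R : realType) (mu nu b : R) (P : probability R R) : Mset mu nu P ->
  Rintegral P `[0%R, 1%R] (@P1 R) <= (3 - 4 * b) * nu + (2 * b ^+ 2) * mu + 0.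
Proof.
move=> HP; have [PDc I1 I2 _] := @Mfacts _ _ _ _ HP; have PD : P `[0%R, 1%R]%classic = 1%E by case: HP.
by have := @upP _ P PD b; rewrite Iquad // I1 I2.
Qed.

Theorem theorem2 (R : realType) (mu rho : R) :
  0 < mu < 1 -> 0 <= rho <= 1 ->
  let nu := mu ^+ 2 + rho * mu * (1 - mu) in
  let s := mu * (1 - mu) * (1 - rho) in
  (L1 mu nu = (nu + 2 * (mu - nu) ^+ 2 / (1 - mu))%:E /\
   nu + 2 * (mu - nu) ^+ 2 / (1 - mu) = mu + s * (2 * mu * (1 - rho) - 1)) /\
  (U1 mu nu = (3 * nu - 2 * nu ^+ 2 / mu)%:E /\
   3 * nu - 2 * nu ^+ 2 / mu = mu + s * (2 * mu + 2 * rho * (1 - mu) - 1)) /\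
  ((U1 mu nu - L1 mu nu)%E = (2 * mu * (1 - mu) * rho * (1 - rho))%:E /\
   2 * mu * (1 - mu) * rho * (1 - rho) <= 1 / 8) /\
  (1 / 2 < mu ->
          ((forall P : probability R R, P \in Mset mu nu ->
              (mu%:E < \int[P]_x (P1 x)%:E)%E)
           <-> rho < 1 - 1 / (2 * mu))).
Proof.
move=> /andP[m0 m1] /andP[r0 r1] nu s.
have mne0 : mu != 0 by rewrite gt_eqF.
have m1ne0 : 1 - mu != 0 by rewrite subr_eq0 eq_sym lt_eqF.
pose Lv := nu + 2 * (mu - nu) ^+ 2 / (1 - mu).
pose Uv := 3 * nu - 2 * nu ^+ 2 / mu.
have eL : Lv = mu + s * (2 * mu * (1 - rho) - 1).
  by rewrite /Lv /nu /s; field.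
have eU : Uv = mu + s * (2 * mu + 2 * rho * (1 - mu) - 1).
  by rewrite /Uv /nu /s; field.
pose a := mu * (1 - rho).
have lowAll : forall P : probability R R, Mset mu nu P -> Lv <= Rintegral P `[0%R, 1%R] (@P1 R).
  move=> P HP; apply: le_trans (@lowM _ mu nu a P HP).
  rewrite le_eqVlt; apply/orP; left; apply/eqP.
  by rewrite /Lv /a /nu; field.
pose b := mu + rho * (1 - mu).
have b0 : 0 < b by rewrite /b; nra.
have bne0 : b != 0 by rewrite gt_eqF.
have upAll : forall P : probability R R, Mset mu nu P -> Rintegral P `[0%R, 1%R] (@P1 R) <= Uv.
  move=> P HP; apply: (le_trans (@upM _ mu nu b P HP)).
  rewrite le_eqVlt; apply/orP; left; apply/eqP.
  by rewrite /Uv /b /nu; field.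
have a1 : 0 < 1 - a by rewrite /a; nra.
have a1ne0 : 1 - a != 0 by rewrite gt_eqF.
have [PL [HPL IPL]] : exists P : probability R R, Mset mu nu P /\
    (\int[P]_x (P1 x)%:E = Lv%:E)%E.
  have Du : `[0%R, 1%R]%classic (1 : R) by rewrite /= in_itv /= ler01 lexx.
  have Dv : `[0%R, 1%R]%classic a by rewrite /= in_itv /= /a; apply/andP; split; nra.
  have hw : 0 <= mu * rho / (1 - a) <= 1.
    apply/andP; split; first by apply: divr_ge0; [nra | lra].
    rewrite ler_pdivrMr // mul1r /a; nra.
  have [P [HP IP]] := @two_point _ _ _ _ Du Dv hw.
  exists P; split.
    move: HP; suff [-> ->] : mu * rho / (1 - a) * 1 + (1 - mu * rho / (1 - a)) * a = mu /\
        mu * rho / (1 - a) * 1 ^+ 2 + (1 - mu * rho / (1 - a)) * a ^+ 2 = nu by [].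
    by split; rewrite /a /nu; field; rewrite /a in a1ne0.
  rewrite IP; congr EFin; rewrite /Lv /P1 /a /nu; field; rewrite /a in a1ne0.
  by rewrite m1ne0 a1ne0.
have [PU [HPU IPU]] : exists P : probability R R, Mset mu nu P /\
    (\int[P]_x (P1 x)%:E = Uv%:E)%E.
  have Du : `[0%R, 1%R]%classic b by rewrite /= in_itv /= /b; apply/andP; split; nra.
  have Dv : `[0%R, 1%R]%classic (0 : R) by rewrite /= in_itv /= ler01 lexx.
  have hw : 0 <= mu / b <= 1.
    apply/andP; split; first by apply: divr_ge0; lra.
    rewrite ler_pdivrMr // mul1r /b; nra.
  have [P [HP IP]] := @two_point _ _ _ _ Du Dv hw.
  exists P; split.
    move: HP; suff [-> ->] : mu / b * b + (1 - mu / b) * 0 = mu /\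
        mu / b * b ^+ 2 + (1 - mu / b) * 0 ^+ 2 = nu by [].
    by split; rewrite /b /nu; field; rewrite /b in bne0.
  rewrite IP; congr EFin; rewrite /Uv /P1 /b /nu; field.
  by rewrite mne0 -/b bne0.
have HL1 : L1 mu nu = Lv%:E.
  apply/eqP; rewrite eq_le; apply/andP; split.
    by rewrite -IPL; apply: ereal_inf_lbound; exists PL.
  apply: le_ereal_inf_tmp => _ [P HP <-].
  have [_ _ _ ->] := @Mfacts _ _ _ _ HP; rewrite lee_fin; exact: lowAll.
have HU1 : U1 mu nu = Uv%:E.
  apply/eqP; rewrite eq_le; apply/andP; split; last first.
    by rewrite -IPU; apply: ereal_sup_ubound; exists PU.
  apply: ge_ereal_sup => _ [P HP <-].
  have [_ _ _ ->] := @Mfacts _ _ _ _ HP; rewrite lee_fin; exact: upAll.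
split; first by split; [exact: HL1 | exact: eL].
split; first by split; [exact: HU1 | exact: eU].
split.
  split.
    rewrite HL1 HU1 -EFinB; congr EFin; rewrite /Uv /Lv /nu; field.
    by rewrite mne0 m1ne0.
  have h1 : mu * (1 - mu) <= 1 / 4.
    have : 0 <= (2 * mu - 1) ^+ 2 by exact: sqr_ge0.
    rewrite expr2 => h; lra.
  have h2 : rho * (1 - rho) <= 1 / 4.
    have : 0 <= (2 * rho - 1) ^+ 2 by exact: sqr_ge0.
    rewrite expr2 => h; lra.
  have h3 : 0 <= mu * (1 - mu) by nra.
  have h4 : 0 <= rho * (1 - rho) by nra.
  have -> : 2 * mu * (1 - mu) * rho * (1 - rho) = 2 * ((mu * (1 - mu)) * (rho * (1 - rho))) by ring.
  nra.
move=> mh.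
have k : 1 - 1 / (2 * mu) - rho = (2 * mu * (1 - rho) - 1) / (2 * mu).
  by field.
split.
  move=> H; have := H PL (mem_set HPL); rewrite IPL lte_fin eL => h.
  have s0 : 0 <= s by rewrite /s; apply: mulr_ge0; [nra | lra].
  have kp : 0 < 2 * mu * (1 - rho) - 1 by nra.
  rewrite -subr_gt0 k; apply: divr_gt0 => //; lra.
move=> hr.
have kp : 0 < 2 * mu * (1 - rho) - 1.
  have -> : 2 * mu * (1 - rho) - 1 = (1 - 1 / (2 * mu) - rho) * (2 * mu) by field.
  apply: mulr_gt0; lra.
have s0 : 0 < s.
  rewrite /s; apply: mulr_gt0; [nra | ].
  have : 0 < 1 / (2 * mu) by apply: divr_gt0; lra.
  lra.
move=> P /set_mem HP.
have [_ _ _ ->] := @Mfacts _ _ _ _ HP; rewrite lte_fin.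
apply: (lt_le_trans _ (lowAll P HP)); rewrite eL; nra.
Qed.
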